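(* Let $f$ be a DNF with $k$ terms and let $y\in\{0,1\}^n$ satisfy $f_{>\tau}$ and not $f_{\le\tau}$ ($\tau=1000k$). Fix any permutation $\pi$ and let $z_0,z_1,\dots$ be the sequence of the sweep process started at $y$. If $i\ge 1$ is such that $(z_i)_a=y_a$ for all $a\in P(y)$, then $\mathcal{T}_f(z_i)\subseteq\mathcal{T}_f(z_{i-1})$.
   Context: Terms are sets of literals, a DNF is a set of terms; $g_{\le L}$ / $g_{>L}$ are the sub-DNFs of terms of length $\le L$ / $>L$. For $x\in\{0,1\}^n$, $\mathcal{T}_f(x)$ is the set of terms of $f$ satisfied by $x$. Protected set: for each term $T\in f$ not satisfied by $y$, take the literal of $T$ with the smallest index $i\in[n]$ that $y$ does not satisfy; $P(y)\subseteq[n]$ is the set of all these indices. Sweep process: given $y$ with $f(y)=1$ and a permutation $\pi$ listing the indices of $[n]$ as $\pi(0),\pi(1),\dots,\pi(n-1)$, set $z_0=y$ and for each $i$, $z_{i+1}=z_i^{\oplus\pi(i)}$ if $f(z_i^{\oplus\pi(i)})=1$ and $z_{i+1}=z_i$ otherwise, where $x^{\oplus j}$ denotes $x$ with bit $j$ flipped. *)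

(* Defs.v *)
From mathcomp Require Import all_boot all_fingroup.
Set Implicit Arguments. Unset Strict Implicit. Unset Printing Implicit Defensive.

(* A literal over variables 'I_n: (i, b) means "x_i = b" (b = true: x_i, b = false: ~x_i). *)
Definition literal (n : nat) := ('I_n * bool)%type.
Definition term (n : nat) := {set literal n}.
Definition dnf (n : nat) := {set term n}.
Definition point (n : nat) := {ffun 'I_n -> bool}.

Definition lit_sat n (l : literal n) (x : point n) : bool := x l.1 == l.2.
Definition term_sat n (T : term n) (x : point n) : bool :=
  [forall l in T, lit_sat l x].
Definition dnf_eval n (f : dnf n) (x : point n) : bool :=
  [exists T in f, term_sat T x].

Definition term_len n (T : term n) : nat := #|T|.
Definition dnf_le n (g : dnf n) (L : nat) : dnf n := [set T in g | term_len T <= L].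
Definition dnf_gt n (g : dnf n) (L : nat) : dnf n := [set T in g | L < term_len T].

Definition sat_terms n (f : dnf n) (x : point n) : {set term n} :=
  [set T in f | term_sat T x].

Definition protected n (f : dnf n) (y : point n) : {set 'I_n} :=
  [set i : 'I_n | [exists T in f, ~~ term_sat T y &&
     [exists l in T, (l.1 == i) && ~~ lit_sat l y] &&
     [forall l in T, ~~ lit_sat l y ==> (i <= l.1)]]].

Definition flip n (x : point n) (j : 'I_n) : point n :=
  [ffun a => if a == j then ~~ x a else x a].

(* The sweep process: z_0 = y, z_{i+1} = z_i^{(+)pi(i)} if f of it is 1, else z_i
   (for i < n; after the n steps the sequence is constant, but only i <= n is used). *)
Fixpoint sweep n (f : dnf n) (y : point n) (pi : {perm 'I_n}) (i : nat) : point n :=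
  match i with
  | 0 => y
  | m.+1 =>
      let z := sweep f y pi m in
      if insub m is Some j then
        (if dnf_eval f (flip z (pi j)) then flip z (pi j) else z)
      else z
  end.

(* Main.v *)
Require Import Defs.
From mathcomp Require Import all_boot all_fingroup.

Lemma sweepS n (f : dnf n) (y : point n) (pi : {perm 'I_n}) (j : 'I_n) :
  sweep f y pi j.+1 =
  (if dnf_eval f (flip (sweep f y pi j) (pi j)) then flip (sweep f y pi j) (pi j)
   else sweep f y pi j).
Proof.
rewrite /=; case: insubP => [j' _ /val_inj -> // | ]; by rewrite ltn_ord.
Qed.

Lemma sweep_untouched n (f : dnf n) (y : point n) (pi : {perm 'I_n}) (m : nat) (a : 'I_n) :
  (forall j : 'I_n, j < m -> pi j != a) -> sweep f y pi m a = y a.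
Proof.
elim: m => [//|m IH] H.
have IH' : sweep f y pi m a = y a by apply: IH => j Hj; apply: H; exact: ltnW.
rewrite /=; case: insubP => [j' _ Hv | _]; last exact: IH'.
case: ifP => _ //.
rewrite ffunE IH'; case: eqP => // E.
have := H j'; rewrite Hv ltnSn E eqxx => /(_ isT) //.
Qed.

Theorem lemma4p4 (n k : nat) (f : dnf n) (y : point n) (pi : {perm 'I_n}) (i : nat) :
  #|f| = k ->
  dnf_eval (dnf_gt f (1000 * k)) y ->
  ~~ dnf_eval (dnf_le f (1000 * k)) y ->
  1 <= i <= n ->
  (forall a, a \in protected f y -> sweep f y pi i a = y a) ->
  sat_terms f (sweep f y pi i) \subset sat_terms f (sweep f y pi i.-1).
Proof.
move=> _ _ _ /andP[]; case: i => [//|m] _ Hmn Hprot.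
pose j : 'I_n := Ordinal Hmn.
have Hz : forall b, pi j != b -> sweep f y pi m.+1 b = sweep f y pi m b.
  move=> b Hb; rewrite (@sweepS n f y pi j) /=.
  case: ifP => _ //; rewrite ffunE; case: eqP => // Eb; by rewrite Eb eqxx in Hb.
have Hpj : sweep f y pi m (pi j) = y (pi j).
  apply: sweep_untouched => j' Hj'; apply/eqP => /perm_inj E.
  by rewrite E /= ltnn in Hj'.
apply/subsetP => T; rewrite !inE /= => /andP[Tf TS]; rewrite Tf /=.
case: (boolP (term_sat T y)) => Ty.
- apply/forallP => l; apply/implyP => lT.
  have := forallP TS l; rewrite lT /= /lit_sat.
  case: (eqVneq (pi j) l.1) => [E | ne].
  + move=> _; rewrite -E Hpj E; exact: (implyP (forallP Ty l) lT).
  + by rewrite Hz.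
- exfalso.
  have [l0 /andP[l0T l0y]] : exists l, (l \in T) && ~~ lit_sat l y.
    move: Ty; rewrite /term_sat negb_forall => /existsP[l]; rewrite negb_imply.
    by exists l.
  case: (arg_minnP (fun l : literal n => val l.1) (P := fun l => (l \in T) && ~~ lit_sat l y) (i0 := l0)).
    by rewrite l0T.
  move=> l /andP[lT ly] Hmin.
  have : l.1 \in protected f y.
    rewrite inE; apply/existsP; exists T; rewrite Tf Ty /=.
    apply/andP; split.
      by apply/existsP; exists l; rewrite lT eqxx ly.
    apply/forallP => l'; apply/implyP => l'T; apply/implyP => l'y.
    by apply: Hmin; rewrite l'T l'y.
  move/Hprot => E.
  have := implyP (forallP TS l) lT; rewrite /lit_sat E.
  by move: ly; rewrite /lit_sat => /negbTE ->.
Qed.
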